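(* For every reduced fraction $t\in(0,\infty)\cap\mathbb Q$, one has $\overline{\omega}_t=xyz\,\omega_t^{-1}$.
   Context: Modified lattice: the planar graph with vertex set $\mathbb Z^2$ whose edges are the horizontal unit segments, the vertical unit segments, and the diagonal segments of slope $-1$ joining $(i,j+1)$ and $(i+1,j)$. Words $\omega_t$: for reduced $t=p/q\in(0,\infty)$, let $L_t$ be the segment from $(0,0)$ to $(q,p)$, oriented from $(0,0)$ to $(q,p)$. List the edges whose relative interior meets $L_t$, in the order of the intersection points along $L_t$. A horizontal (resp. diagonal, vertical) edge contributes $x$ (resp. $y$, $z$) if its midpoint is not on the right-hand side of $L_t$ (including lying on $L_t$), and $x^{-1}$ (resp. $y^{-1}$, $z^{-1}$) if its midpoint is on the right-hand side. $\omega_t$ is the concatenation of these letters, viewed in the free group on $\{x,y,z\}$. Endpoint-completed word $\overline\omega_t$: choose $\varepsilon>0$ sufficiently small (so that the shifted segment has the same order of edge and triangle events away from the endpoints and passes through no lattice vertex and no edge midpoint), and let $\overline L_t$ be the segment from $(-\varepsilon,0)$ to $(q-\varepsilon,p)$, oriented from lower left to upper right. Read the edges crossed by $\overline L_t$ in order, with the half-open convention that the horizontal edge containing the initial endpoint $(-\varepsilon,0)$ is counted as crossed, while the edge containing the terminal endpoint is not counted. Assign letters by the same rule as for $\omega_t$ (horizontal/diagonal/vertical gives $x/y/z$ if the midpoint is not on the right-hand side of $\overline L_t$, and the inverse letter if it is). The resulting word is $\overline\omega_t$. *)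

(* Defs.v *)
From mathcomp Require Import all_boot all_order all_algebra.
Import Order.TTheory GRing.Theory Num.Theory.
Local Open Scope ring_scope.

(* a letter is (generator, sign); generator 0 = x, 1 = y, 2 = z;
   sign true = the generator itself, false = its inverse. *)
Definition letter := (nat * bool)%type.
Definition word := seq letter.

Definition gx : letter := (0%N, true).
Definition gy : letter := (1%N, true).
Definition gz : letter := (2%N, true).

Definition linv (a : letter) : letter := (a.1, ~~ a.2).

Definition winv (w : word) : word := rev (map linv w).

Fixpoint fred (w : word) : word :=
  match w with
  | [::] => [::]
  | a :: w' =>
      match fred w' with
      | b :: r' => if b == linv a then r' else a :: b :: r'
      | [::] => [:: a]
      end
  end.

Definition fg_eq (w1 w2 : word) : Prop := fred w1 = fred w2.

Inductive ekind := EH | EV | ED.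
(* edge of kind k with base point (i,j):
   EH : (i,j)--(i+1,j)   EV : (i,j)--(i,j+1)   ED : (i,j+1)--(i+1,j) *)
Definition edge := (ekind * (int * int))%type.

Section Geometry.
Variable R : realFieldType.

Definition cross (a b : R * R) : R := a.1 * b.2 - a.2 * b.1.
Definition vsub (a b : R * R) : R * R := (a.1 - b.1, a.2 - b.2).

Definition edge_start (e : edge) : R * R :=
  let: (k, (i, j)) := e in
  match k with
  | EH | EV => (i%:~R, j%:~R)
  | ED => (i%:~R, j%:~R + 1)
  end.

Definition edge_dir (e : edge) : R * R :=
  match e.1 with
  | EH => (1, 0)
  | EV => (0, 1)
  | ED => (1, -1)
  end.

Definition edge_mid (e : edge) : R * R :=
  ((edge_start e).1 + (edge_dir e).1 / 2, (edge_start e).2 + (edge_dir e).2 / 2).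

(* Segment P0 + s d.  Parameter s of the intersection point with the line of
   edge e, and parameter u of that point along e (the point is
   edge_start e + u * edge_dir e); valid when the two are not parallel. *)
Definition xden (P0 d : R * R) (e : edge) : R := cross d (edge_dir e).
Definition xs (P0 d : R * R) (e : edge) : R :=
  cross (vsub (edge_start e) P0) (edge_dir e) / xden P0 d e.
Definition xu (P0 d : R * R) (e : edge) : R :=
  cross (vsub (edge_start e) P0) d / xden P0 d e.

(* the relative interior of e meets the segment {P0 + s d | s in [0,1]}
   (closed = true) resp. {P0 + s d | s in [0,1)} (closed = false).
   Parallel edges are never counted (for d = (q,p) with p,q > 0 no lattice
   edge is parallel to d). *)
Definition meets (closed : bool) (P0 d : R * R) (e : edge) : bool :=
  [&& xden P0 d e != 0, 0 < xu P0 d e, xu P0 d e < 1, 0 <= xs P0 d e &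
      (if closed then xs P0 d e <= 1 else xs P0 d e < 1)].

(* letter contributed by an edge: x / y / z for horizontal / diagonal /
   vertical; inverse iff the midpoint lies strictly on the right-hand side
   of the oriented line through P0 with direction d. *)
Definition edge_gen (e : edge) : nat :=
  match e.1 with EH => 0%N | ED => 1%N | EV => 2%N end.

Definition edge_letter (P0 d : R * R) (e : edge) : letter :=
  (edge_gen e, 0 <= cross d (vsub (edge_mid e) P0)).

(* all edges with base point in [-2, q+1] x [-2, p+1]; this contains every
   edge whose relative interior meets a segment lying in [-1, q] x [0, p]. *)
Definition box (q p : nat) : seq edge :=
  flatten [seq [seq (k, ((a%:Z - 2)%R, (b%:Z - 2)%R)) | a <- iota 0 (q + 4),
                                                        b <- iota 0 (p + 4)]
          | k <- [:: EH; EV; ED]].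

Definition crossing_word (closed : bool) (P0 d : R * R) (q p : nat) : word :=
  map (edge_letter P0 d)
      (sort (fun e f => xs P0 d e <= xs P0 d f) (filter (meets closed P0 d) (box q p))).

Definition omega (p q : nat) : word :=
  crossing_word true (0, 0) (q%:R, p%:R) q p.

Definition omega_bar (p q : nat) (eps : R) : word :=
  crossing_word false (- eps, 0) (q%:R, p%:R) q p.

End Geometry.

(* Main.v *)
Require Import Defs.
From HB Require Import structures.
From mathcomp Require Import all_boot all_order all_algebra.
From mathcomp Require Import zify ring lra.
Import Order.TTheory GRing.Theory Num.Theory.
Local Open Scope ring_scope.

Definition ekind_eqb (a b : ekind) : bool :=
  match a, b with EH, EH | EV, EV | ED, ED => true | _, _ => false end.
Lemma ekind_eqP : Equality.axiom ekind_eqb.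
Proof. by case; case; constructor. Qed.
HB.instance Definition _ := hasDecEq.Build ekind ekind_eqP.

Section Comp.
Variable R : realFieldType.
Variables p q : nat.
Hypothesis p0 : (0 < p)%N.
Hypothesis q0 : (0 < q)%N.

Definition P : int := p%:Z.
Definition Q : int := q%:Z.
Definition dd : R * R := (q%:R, p%:R).
Definition P0 (eps : R) : R * R := (- eps, 0).

Definition den (k : ekind) : int := match k with EH => P | EV => Q | ED => P + Q end.
Definition Aof (e : edge) : int := let: (k, (i, j)) := e in
  match k with EH => j * Q - i * P | EV => i * P - j * Q | ED => (j + 1) * Q - i * P end.
Definition sgn (k : ekind) : R := match k with EV => 1 | _ => -1 end.
Definition Bof (e : edge) : int := let: (k, (i, j)) := e in
  match k with EH => j | EV => i | ED => i + j + 1 end.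
Definition tau (k : ekind) : R := match k with EH => 0 | _ => 1 end.
Definition Cof (e : edge) : int := let: (k, (i, j)) := e in
  match k with EH => 2 * (j * Q - i * P) - P | EV => 2 * (j * Q - i * P) + Q
  | ED => 2 * (j * Q - i * P) + Q - P end.

Lemma PR : (P%:~R : R) = p%:R. Proof. by []. Qed.
Lemma QR : (Q%:~R : R) = q%:R. Proof. by []. Qed.
Lemma pR : (0 : R) < p%:R. Proof. by rewrite ltr0n. Qed.
Lemma qR : (0 : R) < q%:R. Proof. by rewrite ltr0n. Qed.
Lemma den_gt0 k : 0 < den k.
Proof. rewrite /den /P /Q; case: k; lia. Qed.
Lemma denR_gt0 k : (0 : R) < (den k)%:~R.
Proof. by rewrite ltr0z den_gt0. Qed.

Lemma xden_eq eps e : xden R (P0 eps) dd e =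
  match e.1 with EH => - p%:R | EV => q%:R | ED => - (p%:R + q%:R) end.
Proof. case: e => [[] [i j]]; rewrite /xden /cross /edge_dir /dd /=; ring. Qed.

Lemma xu_eq eps e : xu R (P0 eps) dd e =
  ((Aof e)%:~R + sgn e.1 * eps * p%:R) / (den e.1)%:~R.
Proof.
have hp := pR; have hq := qR.
case: e => [[] [i j]]; rewrite /xu xden_eq /cross /vsub /edge_start /edge_dir /dd /P0 /= ?intrD ?intrB ?intrM -?PR -?QR; field.
all: by rewrite lt0r_neq0 ?addr_gt0.
Qed.

Lemma xs_eq eps e : xs R (P0 eps) dd e =
  ((Bof e)%:~R + tau e.1 * eps) / (den e.1)%:~R.
Proof.
have hp := pR; have hq := qR.
case: e => [[] [i j]]; rewrite /xs xden_eq /cross /vsub /edge_start /edge_dir /dd /P0 /= ?intrD ?intrB ?intrM -?PR -?QR; field.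
all: by rewrite lt0r_neq0 ?addr_gt0.
Qed.

Lemma cross_mid_eq eps e : cross R dd (vsub R (edge_mid R e) (P0 eps)) =
  (Cof e)%:~R / 2 - eps * p%:R.
Proof.
case: e => [[] [i j]]; rewrite /edge_mid /cross /vsub /edge_start /edge_dir /dd /P0 /= ?intrD ?intrB ?intrM -?PR -?QR; field.
all: by [].
Qed.
End Comp.


Section Z.
Variable R : realFieldType.
Implicit Types (m n : int) (d : R).

Lemma core1 m n d : 0 < d -> d < 1 -> (m%:~R < n%:~R + d) = (m <= n).
Proof.
move=> d0 d1; case: (lerP m n) => h.
- have : (m%:~R : R) <= n%:~R by rewrite ler_int.
  move=> h'; apply/idP; lra.
- have : (n + 1)%:~R <= (m%:~R : R) by rewrite ler_int; lia.
  rewrite intrD => h'; apply/negbTE; rewrite -leNgt; lra.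
Qed.

Lemma core2 m n d : 0 < d -> d < 1 -> (m%:~R + d < n%:~R) = (m < n).
Proof.
move=> d0 d1; case: (ltrP m n) => h.
- have : (m + 1)%:~R <= (n%:~R : R) by rewrite ler_int; lia.
  rewrite intrD => h'; apply/idP; lra.
- have : (n%:~R : R) <= m%:~R by rewrite ler_int.
  move=> h'; apply/negbTE; rewrite -leNgt; lra.
Qed.

Lemma core3 m n d : 0 < d -> d < 1 -> (m%:~R <= n%:~R + d) = (m <= n).
Proof.
move=> d0 d1; case: (lerP m n) => h.
- have : (m%:~R : R) <= n%:~R by rewrite ler_int.
  move=> h'; apply/idP; lra.
- have : (n + 1)%:~R <= (m%:~R : R) by rewrite ler_int; lia.
  rewrite intrD => h'; apply/negbTE; rewrite -ltNge; lra.
Qed.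

Lemma Lz1 a d : 0 < d -> d < 1 -> (0 < a%:~R - d) = (0 < a).
Proof. move=> d0 d1; rewrite -(core2 0 a d d0 d1) /=; apply/idP/idP => /= h; lra. Qed.
Lemma Lz2 a D d : 0 < d -> d < 1 -> (a%:~R - d < D%:~R) = (a <= D).
Proof. move=> d0 d1; rewrite -(core1 a D d d0 d1); apply/idP/idP => h; lra. Qed.
Lemma Lz3 a d : 0 < d -> d < 1 -> (0 < a%:~R + d) = (0 <= a).
Proof. move=> d0 d1; exact: (core1 0 a d d0 d1). Qed.
Lemma Lz4 a D d : 0 < d -> d < 1 -> (a%:~R + d < D%:~R) = (a < D).
Proof. move=> d0 d1; exact: (core2 a D d d0 d1). Qed.
Lemma Lz5 b d : 0 < d -> d < 1 -> (0 <= b%:~R + d) = (0 <= b).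
Proof. move=> d0 d1; exact: (core3 0 b d d0 d1). Qed.
End Z.


Section M.
Variable R : realFieldType.
Variables p q : nat.
Hypothesis p0 : (0 < p)%N.
Hypothesis q0 : (0 < q)%N.

Definition mL (e : edge) : bool :=
  [&& 0 < Aof p q e, Aof p q e < den p q e.1, 0 <= Bof e & Bof e <= den p q e.1].
Definition mB (e : edge) : bool :=
  [&& (if e.1 is EV then 0 <= Aof p q e else 0 < Aof p q e),
      (if e.1 is EV then Aof p q e < den p q e.1 else Aof p q e <= den p q e.1),
      0 <= Bof e & Bof e < den p q e.1].

Lemma divD_gt0 (x D : R) : 0 < D -> (0 < x / D) = (0 < x).
Proof. by move=> D0; rewrite pmulr_lgt0 // invr_gt0. Qed.
Lemma divD_ge0 (x D : R) : 0 < D -> (0 <= x / D) = (0 <= x).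
Proof. by move=> D0; rewrite pmulr_lge0 // invr_gt0. Qed.
Lemma divD_lt1 (x D : R) : 0 < D -> (x / D < 1) = (x < D).
Proof. by move=> D0; rewrite ltr_pdivrMr // mul1r. Qed.
Lemma divD_le1 (x D : R) : 0 < D -> (x / D <= 1) = (x <= D).
Proof. by move=> D0; rewrite ler_pdivrMr // mul1r. Qed.

Lemma meets_eq c eps e : meets R c (P0 R eps) (dd R p q) e =
  [&& 0 < (Aof p q e)%:~R + sgn R e.1 * eps * p%:R,
      (Aof p q e)%:~R + sgn R e.1 * eps * p%:R < (den p q e.1)%:~R,
      0 <= (Bof e)%:~R + tau R e.1 * eps &
      if c then (Bof e)%:~R + tau R e.1 * eps <= (den p q e.1)%:~R
      else (Bof e)%:~R + tau R e.1 * eps < (den p q e.1)%:~R].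
Proof.
have D0 := denR_gt0 R p q p0 q0 e.1.
rewrite /meets (xu_eq _ _ _ p0 q0) (xs_eq _ _ _ p0 q0).
have -> : xden R (P0 R eps) (dd R p q) e != 0.
  rewrite xden_eq; have := pR R p p0; have := qR R q q0.
  move=> h1 h2; case: e.1; rewrite ?oppr_eq0 lt0r_neq0 //.
  exact: addr_gt0.
by rewrite divD_gt0 // divD_lt1 // divD_ge0 // divD_le1 // ltr_pdivrMr // mul1r.
Qed.

Lemma meets_L e : meets R true (P0 R 0) (dd R p q) e = mL e.
Proof.
rewrite meets_eq /mL !mulr0 !mul0r !addr0 ltr0z ltr_int ler0z ler_int.
by [].
Qed.

Lemma meets_B eps e : 0 < eps -> eps * p%:R < 1 -> eps < 1 ->
  meets R false (P0 R eps) (dd R p q) e = mB e.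
Proof.
move=> e0 e1 e2; have ep0 : 0 < eps * p%:R by rewrite mulr_gt0 // ltr0n.
rewrite meets_eq /mB; case: e => [[] [i j]] /=;
rewrite ?mulN1r ?mulNr ?mul1r ?mul0r ?addr0 -?mulrA ?Lz1 ?Lz2 ?Lz3 ?Lz4 ?Lz5 ?ler0z ?ltr_int //.
Qed.
End M.


Lemma mul_gap (x D : int) : 0 < D -> 0 < x * D -> x * D < D -> False.
Proof. move=> h1 h2 h3; have [h|h] : (x <= 0) \/ (1 <= x) by lia. all: nia. Qed.

Lemma mul_small (x D : int) : 0 < D -> 0 <= x * D -> x * D < D -> x = 0.
Proof. move=> h1 h2 h3; have [h|[h|h]] : (x < 0) \/ (x = 0) \/ (1 <= x) by lia. all: nia. Qed.

Lemma mul_zero (x D : int) : 0 < D -> - D < x * D -> x * D < D -> x = 0.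
Proof. move=> h1 h2 h3; have [h|[h|h]] : (x <= -1) \/ (x = 0) \/ (1 <= x) by lia. all: nia. Qed.

Lemma mul_zero2 (a b D : int) : 0 < D -> - D < (a - b) * D -> (a - b) * D < D -> a = b.
Proof. move=> h1 h2 h3; have := mul_zero _ _ h1 h2 h3; lia. Qed.

Lemma pos_of_mul (x D : int) : 0 < x * D -> 0 < D -> 0 < x.
Proof. by move=> h hD; rewrite -(pmulr_lgt0 _ hD). Qed.

Section I.
Variables p q : nat.
Hypothesis p0 : (0 < p)%N.
Hypothesis q0 : (0 < q)%N.
Hypothesis cop : coprime p q.

Lemma P_gt0 : 0 < P p. Proof. rewrite /P; lia. Qed.
Lemma Q_gt0 : 0 < Q q. Proof. rewrite /Q; lia. Qed.

Lemma gaussP (j m : int) : j * Q q = m * P p -> exists k, j = k * P p.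
Proof.
move=> h; apply/dvdzP; rewrite -(Gauss_dvdzl _ (_ : coprimez (P p) (Q q))).
  by rewrite h dvdz_mull.
by rewrite coprimezE.
Qed.

Lemma gaussQ (i m : int) : i * P p = m * Q q -> exists k, i = k * Q q.
Proof.
move=> h; apply/dvdzP; rewrite -(Gauss_dvdzl _ (_ : coprimez (Q q) (P p))).
  by rewrite h dvdz_mull.
by rewrite coprimezE coprime_sym.
Qed.

Definition E3 : seq edge := [:: (EH, (-1, 0)); (ED, (-1, 0)); (EV, (0, 0))].

Lemma mB_iff e : mB p q e = mL p q e || (e \in E3).
Proof.
have hP := P_gt0; have hQ := Q_gt0.
case: e => [[] [i j]]; rewrite /mB /mL /Aof /Bof /den /E3 /= !inE /=.
all: rewrite ?xpair_eqE /=; move: hP hQ; set P' := P p; set Q' := Q q; move=> hP hQ.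
- apply/idP/idP.
  + case/and4P=> a1 a2 b1 b2.
    have [lt|eq] : (j * Q' - i * P' < P') \/ (j * Q' - i * P' = P') by lia.
      by rewrite a1 lt b1 /=; apply/orP; left; lia.
    have hx : j * Q' = (i + 1) * P' by lia.
    have [k hk] := gaussP j (i + 1) hx.
    have k0 : k = 0 by apply: (mul_small _ _ hP); lia.
    move: hk eq; rewrite k0 mul0r => -> eq.
    have : (i + 1) * P' = 0 by lia.
    move/eqP; rewrite mulf_eq0 (gt_eqF hP) orbF => /eqP hi.
    by apply/orP; right; apply/orP; left; apply/andP; split; apply/eqP; lia.
  + case/orP => [/and4P [a1 a2 b1 b2]|/orP [/andP[/eqP -> /eqP ->]|//]].
      have [lt|eq] : (j < P') \/ (j = P') by lia.
        by apply/and4P; split => //; lia.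
      exfalso; apply: (mul_gap (Q' - i) P' hP); nia.
    apply/and4P; split; lia.
- apply/idP/idP.
  + case/and4P=> a1 a2 b1 b2.
    have [lt|eq] : (0 < i * P' - j * Q') \/ (i * P' - j * Q' = 0) by lia.
      by rewrite lt a2 b1 /=; apply/orP; left; lia.
    have hx : i * P' = j * Q' by lia.
    have [k hk] := gaussQ i j hx.
    have k0 : k = 0 by apply: (mul_small _ _ hQ); lia.
    move: hk eq; rewrite k0 mul0r => -> eq.
    have : j * Q' = 0 by lia.
    move/eqP; rewrite mulf_eq0 (gt_eqF hQ) orbF => /eqP hj.
    by apply/orP; right; apply/andP; split; apply/eqP; lia.
  + case/orP => [/and4P [a1 a2 b1 b2]|/andP[/eqP -> /eqP ->]].
      have [lt|eq] : (i < Q') \/ (i = Q') by lia.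
        by apply/and4P; split => //; lia.
      exfalso; apply: (mul_gap (P' - j) Q' hQ); nia.
    apply/and4P; split; lia.
- apply/idP/idP.
  + case/and4P=> a1 a2 b1 b2.
    have [lt|eq] : ((j + 1) * Q' - i * P' < P' + Q') \/ ((j + 1) * Q' - i * P' = P' + Q') by lia.
      by rewrite a1 lt b1 /=; apply/orP; left; lia.
    have hx : j * Q' = (i + 1) * P' by lia.
    have [k hk] := gaussP j (i + 1) hx.
    have hi : i + 1 = k * Q'.
      have : (i + 1 - k * Q') * P' = 0 by move: eq; rewrite hk; lia.
      by move/eqP; rewrite mulf_eq0 (gt_eqF hP) orbF => /eqP; lia.
    have k0 : k = 0.
      apply: (mul_small _ _ (_ : 0 < P' + Q')); first by lia.
        nia.
      nia.
    have j0 : j = 0 by rewrite hk k0 mul0r.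
    have i0 : i = -1 by move: hi; rewrite k0 mul0r; lia.
    by apply/orP; right; apply/orP; left; apply/andP; split; apply/eqP.
  + case/orP => [/and4P [a1 a2 b1 b2]|/orP [/andP[/eqP -> /eqP ->]|//]].
      have [lt|eq] : (i + j + 1 < P' + Q') \/ (i + j + 1 = P' + Q') by lia.
        by apply/and4P; split => //; lia.
      have hi : i = P' + Q' - j - 1 by lia.
      have E : (j + 1 - P') * (P' + Q') = (j + 1) * Q' - i * P' by rewrite hi; ring.
      exfalso; apply: (mul_gap (j + 1 - P') (P' + Q')); [lia | rewrite E; lia | rewrite E; lia].
    apply/and4P; split; lia.
Qed.

Lemma mL_B_gt0 e : mL p q e -> 0 < Bof e.
Proof.
have hP := P_gt0; have hQ := Q_gt0.
case: e => [[] [i j]]; rewrite /mL /Aof /Bof /den /=;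
move: hP hQ; set P' := P p; set Q' := Q q; move=> hP hQ; case/and4P=> a1 a2 b1 b2.
- have [h|h] : (0 < j) \/ (j = 0) by lia. by []. 
  exfalso; apply: (mul_gap (- i) P' hP); move: a1 a2; rewrite h; lia.
- have [h|h] : (0 < i) \/ (i = 0) by lia. by []. 
  exfalso; apply: (mul_gap (- j) Q' hQ); move: a1 a2; rewrite h; lia.
- have [h|h] : (0 < i + j + 1) \/ (i + j + 1 = 0) by lia. by [].
  have hi : i = - j - 1 by lia.
  have E : (j + 1) * (P' + Q') = (j + 1) * Q' - i * P' by rewrite hi; ring.
  exfalso; apply: (mul_gap (j + 1) (P' + Q')); [lia | rewrite E; lia | rewrite E; lia].
Qed.

Lemma mL_E3 e : e \in E3 -> mL p q e = false.
Proof.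
have hP := P_gt0; have hQ := Q_gt0.
rewrite !inE => /or3P [] /eqP ->; rewrite /mL /Aof /Bof /den /=.
all: apply/negP; lia.
Qed.

Lemma key0_inj e f : mL p q e -> mL p q f ->
  Bof e * den p q f.1 = Bof f * den p q e.1 -> e = f.
Proof.
have hP := P_gt0; have hQ := Q_gt0.
case: e => [ke [i j]]; case: f => [kf [i' j']].
rewrite /mL /Aof /Bof /den /=;
move: hP hQ; set P' := P p; set Q' := Q q; move=> hP hQ.
have hPQ : 0 < P' + Q' by lia.
case: ke; case: kf => /= /and4P [a1 a2 b1 b2] /and4P [c1 c2 d1 d2] h.
- have jj : j = j' by apply: (mul_zero2 j j' P'); lia.
  have ii : i = i' by apply: (mul_zero2 i i' P'); lia.
  by rewrite ii jj.
- exfalso; apply: (mul_gap (i' - i) P' hP); lia.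
- exfalso; apply: (mul_gap (i' + j' + 1 - j - i) P' hP); lia.
- exfalso; apply: (mul_gap (j' - j) Q' hQ); lia.
- have ii : i = i' by apply: (mul_zero2 i i' Q'); lia.
  have jj : j = j' by apply: (mul_zero2 j j' Q'); lia.
  by rewrite ii jj.
- exfalso; apply: (mul_gap (i' + j' + 1 - i - j) Q' hQ); lia.
- exfalso; apply: (mul_gap (i + j + 1 - j' - i') P' hP); lia.
- exfalso; apply: (mul_gap (i + j + 1 - i' - j') Q' hQ); lia.
- have nn : i + j + 1 = i' + j' + 1 by apply: (mul_zero2 _ _ (P' + Q')); lia.
  have ii : i = i' by apply: (mul_zero2 i i' (P' + Q')); lia.
  have jj : j = j' by lia.
  by rewrite ii jj.
Qed.

Definition erot (e : edge) : edge := let: (k, (i, j)) := e in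
  match k with
  | EH => (EH, (Q q - 1 - i, P p - j))
  | EV => (EV, (Q q - i, P p - j - 1))
  | ED => (ED, (Q q - 1 - i, P p - 1 - j)) end.

Lemma erotK e : erot (erot e) = e.
Proof. case: e => [[] [i j]] /=; congr (_, (_, _)); ring. Qed.
Lemma rot_kind e : (erot e).1 = e.1.
Proof. by case: e => [[] [i j]]. Qed.
Lemma Bof_rot e : Bof (erot e) = den p q e.1 - Bof e.
Proof. case: e => [[] [i j]] /=; rewrite /den; ring. Qed.
Lemma Cof_rot e : Cof p q (erot e) = - Cof p q e.
Proof. case: e => [[] [i j]] /=; rewrite /Cof; ring. Qed.
Lemma mL_rot e : mL p q (erot e) = mL p q e.
Proof.
case: e => [[] [i j]]; rewrite /mL /Aof /Bof /den /=; apply/idP/idP; lia.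
Qed.

Lemma mL_bounds k i j : mL p q (k, (i, j)) ->
  [/\ -2 <= i, i <= Q q + 1, -2 <= j & j <= P p + 1].
Proof.
have hP := P_gt0; have hQ := Q_gt0.
rewrite /mL /Aof /Bof /den /=; move: hP hQ; set P' := P p; set Q' := Q q; move=> hP hQ.
have hPQ : 0 < P' + Q' by lia.
case: k => /and4P [a1 a2 b1 b2].
- have h0 : 0 <= j * Q' by apply: mulr_ge0; lia.
  have h1 : 0 < (i + 1) * P' by lia.
  have h3 : 0 <= (P' - j) * Q' by apply: mulr_ge0; lia.
  have h2 : 0 < (Q' - i) * P' by lia.
  have := pos_of_mul _ _ h1 hP; have := pos_of_mul _ _ h2 hP; move=> *; split; lia.
- have h0 : 0 <= i * P' by apply: mulr_ge0; lia.
  have h1 : 0 < (j + 1) * Q' by lia.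
  have h3 : 0 <= (Q' - i) * P' by apply: mulr_ge0; lia.
  have h2 : 0 < (P' - j) * Q' by lia.
  have := pos_of_mul _ _ h1 hQ; have := pos_of_mul _ _ h2 hQ; move=> *; split; lia.
- have h0 : 0 <= (i + j + 1) * Q' by apply: mulr_ge0; lia.
  have h1 : 0 < (i + 1) * (P' + Q') by lia.
  have h3 : 0 <= (P' + Q' - (i + j + 1)) * Q' by apply: mulr_ge0; lia.
  have h2 : 0 < (Q' - i) * (P' + Q') by lia.
  have hi1 := pos_of_mul _ _ h1 hPQ; have hi2 := pos_of_mul _ _ h2 hPQ.
  have h4 : 0 <= i * P' by apply: mulr_ge0; lia.
  have h5 : 0 < (j + 1) * Q' by lia.
  have h6 : 0 <= (Q' - 1 - i) * P' by apply: mulr_ge0; lia.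
  have h7 : 0 < (P' - j) * Q' by lia.
  have := pos_of_mul _ _ h5 hQ; have := pos_of_mul _ _ h7 hQ; move=> *; split; lia.
Qed.
End I.


Definition gbox (q p : nat) (k : ekind) : seq edge :=
  [seq (k, ((a%:Z - 2)%R, (b%:Z - 2)%R)) | a <- iota 0 (q + 4), b <- iota 0 (p + 4)].

Lemma box_eq q p : box q p = gbox q p EH ++ gbox q p EV ++ gbox q p ED.
Proof. by rewrite /box /= cats0. Qed.

Lemma gbox_kind q p k z : z \in gbox q p k -> z.1 = k.
Proof. by case/allpairsP => -[a b] /= [_ _ ->]. Qed.

Lemma gbox_uniq q p k : uniq (gbox q p k).
Proof.
apply: allpairs_uniq; rewrite ?iota_uniq //.
move=> [a b] [a' b'] _ _ /= [h1 h2]; congr (_, _); lia.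
Qed.

Lemma uniq_box q p : uniq (box q p).
Proof.
rewrite box_eq !cat_uniq !gbox_uniq /= !andbT.
apply/andP; split; [apply/hasPn => z /[dup] + zin; rewrite mem_cat => /orP [] /gbox_kind h|];
  try (apply/negP => /gbox_kind; rewrite h //).
apply/hasPn => z /gbox_kind h; apply/negP => /gbox_kind; rewrite h //.
Qed.

Lemma in_box q p k (i j : int) : -2 <= i -> i <= q%:Z + 1 -> -2 <= j -> j <= p%:Z + 1 ->
  (k, (i, j)) \in box q p.
Proof.
move=> h1 h2 h3 h4; rewrite box_eq !mem_cat.
have H : (k, (i, j)) \in gbox q p k.
  apply/allpairsP; exists (absz (i + 2), absz (j + 2)) => /=; rewrite !mem_iota.
  split; [lia | lia | congr (_, (_, _)); lia].
by case: k H => ->; rewrite ?orbT.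
Qed.


Lemma frac_le (R : realFieldType) (a b D1 D2 : R) : 0 < D1 -> 0 < D2 ->
  (a / D1 <= b / D2) = (a * D2 <= b * D1).
Proof. by move=> h1 h2; rewrite ler_pdivrMr // mulrAC ler_pdivlMr. Qed.
Lemma frac_lt (R : realFieldType) (a b D1 D2 : R) : 0 < D1 -> 0 < D2 ->
  (a / D1 < b / D2) = (a * D2 < b * D1).
Proof. by move=> h1 h2; rewrite ltr_pdivrMr // mulrAC ltr_pdivlMr. Qed.

Section Main.
Variable R : realFieldType.
Variables p q : nat.
Hypothesis p0 : (0 < p)%N.
Hypothesis q0 : (0 < q)%N.
Hypothesis cop : coprime p q.
Variable eps : R.
Hypothesis e0 : 0 < eps.
Hypothesis e1 : eps * (p%:R + q%:R) < 1 / 2.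

Let d := dd R p q.
Definition key e := xs R (P0 R 0) d e.
Definition keyE e := xs R (P0 R eps) d e.
Definition leL := fun e f => key e <= key f.
Definition leE := fun e f => keyE e <= keyE f.
Definition S := sort leL (filter (meets R true (P0 R 0) d) (box q p)).
Definition T := sort leE (filter (meets R false (P0 R eps) d) (box q p)).

Lemma hpR : (0 : R) < p%:R. Proof. by rewrite ltr0n. Qed.
Lemma hqR : (0 : R) < q%:R. Proof. by rewrite ltr0n. Qed.
Lemma p1R : (1 : R) <= p%:R. Proof. by rewrite ler1n. Qed.
Lemma q1R : (1 : R) <= q%:R. Proof. by rewrite ler1n. Qed.
Lemma epsp : eps * p%:R < 1.
Proof. have := mulr_gt0 e0 hqR; have := mulr_gt0 e0 hpR; have := ler_wpM2l (ltW e0) p1R; move: e1; rewrite mulrDr mulr1; lra. Qed.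
Lemma eps1 : eps < 1.
Proof. have := mulr_gt0 e0 hqR; have := mulr_gt0 e0 hpR; have := ler_wpM2l (ltW e0) p1R; move: e1; rewrite mulrDr mulr1; lra. Qed.
Lemma eps2p : 2 * (eps * p%:R) < 1.
Proof. have := mulr_gt0 e0 hqR; have := mulr_gt0 e0 hpR; have := ler_wpM2l (ltW e0) p1R; move: e1; rewrite mulrDr mulr1; lra. Qed.

Lemma memS e : (e \in S) = mL p q e.
Proof.
rewrite /S mem_sort mem_filter meets_L //.
case h: (mL p q e) => //=; case: e h => [k [i j]] h.
have [] := mL_bounds _ _ p0 q0 cop _ _ _ h => *; exact: in_box.
Qed.

Lemma E3_box e : e \in E3 -> e \in box q p.
Proof. by rewrite !inE => /or3P [] /eqP ->; apply: in_box; rewrite /=; lia. Qed.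

Lemma memT e : (e \in T) = mL p q e || (e \in E3).
Proof.
rewrite /T mem_sort mem_filter (meets_B _ _ _ p0 q0 _ _ e0 epsp eps1) mB_iff //.
case h: (mL p q e) => /=.
  by have := memS e; rewrite h /S mem_sort mem_filter => /andP [_ ->].
by case h3: (e \in E3) => //=; rewrite E3_box.
Qed.

Lemma uniqS : uniq S.
Proof. by rewrite sort_uniq filter_uniq // uniq_box. Qed.
Lemma uniqT : uniq T.
Proof. by rewrite sort_uniq filter_uniq // uniq_box. Qed.

Lemma key_eq e : key e = (Bof e)%:~R / (den p q e.1)%:~R.
Proof. by rewrite /key xs_eq // mulr0 addr0. Qed.
Lemma keyE_eq e : keyE e = ((Bof e)%:~R + tau R e.1 * eps) / (den p q e.1)%:~R.
Proof. by rewrite /keyE xs_eq. Qed.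

Lemma key_le_int e f : (key e <= key f) = (Bof e * den p q f.1 <= Bof f * den p q e.1).
Proof. by rewrite !key_eq frac_le ?denR_gt0 // -!intrM ler_int. Qed.

Lemma tau_small k k' : 0 <= tau R k * eps * (den p q k')%:~R < 1.
Proof.
have hD : (den p q k')%:~R <= p%:R + q%:R :> R.
  case: k' => /=; rewrite /den /P /Q ?intrD /=.
  - have := hqR; lra.
  - have := hpR; lra.
  - lra.
have hD0 := denR_gt0 R p q p0 q0 k'.
case: k => /=; rewrite ?mul0r ?mul1r ?lexx ?ltr01 //.
all: apply/andP; split; first by rewrite mulr_ge0 // ltW.
all: have := ler_wpM2l (ltW e0) hD; move: e1; lra.
Qed.

Lemma keyE_strict e f : Bof e * den p q f.1 < Bof f * den p q e.1 -> keyE e < keyE f.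
Proof.
move=> h; rewrite !keyE_eq frac_lt ?denR_gt0 //.
have : (Bof e * den p q f.1 + 1)%:~R <= (Bof f * den p q e.1)%:~R :> R by rewrite ler_int; lia.
rewrite intrD !intrM => h'.
have /andP [a1 a2] := tau_small e.1 f.1.
have /andP [b1 b2] := tau_small f.1 e.1.
rewrite !mulrDl; lra.
Qed.

Lemma keyE_mono e f : mL p q e -> mL p q f -> leL e f -> leE e f.
Proof.
move=> he hf; rewrite /leL /leE key_le_int => h.
have [lt|eq] : (Bof e * den p q f.1 < Bof f * den p q e.1) \/ (Bof e * den p q f.1 = Bof f * den p q e.1) by lia.
  exact/ltW/keyE_strict.
by rewrite (key0_inj _ _ p0 q0 cop _ _ he hf eq).
Qed.

Lemma keyE_EH : keyE (EH, (-1, 0)) = 0.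
Proof. by rewrite keyE_eq /= mul0r addr0 mul0r. Qed.
Lemma keyE_ED : keyE (ED, (-1, 0)) = eps / (p%:R + q%:R).
Proof. rewrite keyE_eq (_ : Bof (ED, (-1, 0)) = 0); last by []. rewrite /den /P /Q /= mul1r add0r; congr (_ / _). by rewrite intrD. Qed.
Lemma keyE_EV : keyE (EV, (0, 0)) = eps / q%:R.
Proof. by rewrite keyE_eq /= /den /Q mul1r add0r. Qed.

Lemma E3_lt_S f : mL p q f -> eps / q%:R < keyE f.
Proof.
move=> hf; have hB := mL_B_gt0 _ _ p0 q0 cop _ hf.
rewrite keyE_eq frac_lt ?hqR ?denR_gt0 //.
have /andP [a1 a2] := tau_small EV f.1; rewrite /= mul1r in a1 a2.
have : 1 <= (Bof f)%:~R :> R by rewrite ler1z.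
have /andP [b1 b2] := tau_small f.1 EV.
move=> h1; have := q1R; have := hqR => hq1 hq2.
have : (Bof f)%:~R * 1 <= (Bof f)%:~R * q%:R :> R by rewrite ler_wpM2l // ?(le_trans ler01).
have : 0 <= tau R f.1 * eps * q%:R.
  by move: b1; rewrite /den /Q.
rewrite mulr1 mulrDl; lra.
Qed.

Lemma E3_le_S f : mL p q f -> eps / q%:R <= keyE f.
Proof. by move=> hf; apply/ltW/E3_lt_S. Qed.


Lemma E3_le e : e \in E3 -> keyE e <= eps / q%:R.
Proof.
have hq := hqR; have hp := hpR.
rewrite !inE => /or3P [] /eqP ->; rewrite ?keyE_EH ?keyE_ED ?keyE_EV //.
- by rewrite divr_ge0 // ltW.
- rewrite frac_le //; last by rewrite addr_gt0.
  by rewrite ler_wpM2l ?(ltW e0) // lerDr ltW.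
Qed.

Lemma sortedS_L : sorted leL S.
Proof. by apply: sort_sorted => e f; exact: le_total. Qed.

Lemma sortedS_E : sorted leE S.
Proof.
apply: (@sub_in_sorted _ (mL p q) leL leE _ S); last exact: sortedS_L.
  by move=> e f he hf; exact: keyE_mono.
by apply/allP => e; rewrite memS.
Qed.

Lemma T_eq : T = E3 ++ S.
Proof.
have hq := hqR; have hp := hpR.
have f1 : 0 < eps / (p%:R + q%:R) by rewrite divr_gt0 // addr_gt0.
have f2 : eps / (p%:R + q%:R) < eps / q%:R.
  rewrite frac_lt //; last by rewrite addr_gt0.
  by rewrite ltr_pM2l // ltrDr.
have f3 : 0 < eps / q%:R by rewrite divr_gt0.
symmetry; apply: (@sorted_eq_in _ leE).
- by move=> y x z _ _ _; exact: le_trans.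
- move=> e f; rewrite !mem_cat => he hf /andP [h1 h2].
  have h : keyE e = keyE f by apply/le_anti/andP.
  case/orP: he => he; case/orP: hf => hf.
  + move: he hf h; rewrite !inE => /or3P [] /eqP -> /or3P [] /eqP ->;
    rewrite ?keyE_EH ?keyE_ED ?keyE_EV // => h; exfalso; move: h; lra.
  + rewrite memS in hf; exfalso; move: (E3_le _ he) (E3_lt_S _ hf); rewrite h; lra.
  + rewrite memS in he; exfalso; move: (E3_lt_S _ he) (E3_le _ hf); rewrite h; lra.
  + rewrite memS in he; rewrite memS in hf.
    have [lt|[eq|gt]] : (Bof e * den p q f.1 < Bof f * den p q e.1) \/
      (Bof e * den p q f.1 = Bof f * den p q e.1) \/
      (Bof f * den p q e.1 < Bof e * den p q f.1) by lia.
    * by move: (keyE_strict _ _ lt); rewrite h ltxx.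
    * exact: (key0_inj _ _ p0 q0 cop e f he hf eq).
    * by move: (keyE_strict _ _ gt); rewrite h ltxx.
- rewrite /= /leE keyE_EH keyE_ED keyE_EV (ltW f1) (ltW f2) /=.
  rewrite path_sortedE; last by move=> y x z; exact: le_trans.
  rewrite sortedS_E andbT; apply/allP => f; rewrite memS keyE_EV; exact: E3_le_S.
- by apply: sort_sorted => e f; exact: le_total.
- apply: uniq_perm.
  + rewrite cat_uniq uniqS andbT /=; apply/hasPn => f; rewrite memS => hf.
    by apply/negP => /(mL_E3 _ _ p0 q0 cop); rewrite hf.
  + exact: uniqT.
  + by move=> e; rewrite memT mem_cat memS orbC.
Qed.


Lemma key_rot e : key (erot p q e) = 1 - key e.
Proof.
rewrite !key_eq Bof_rot rot_kind intrB; field.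
exact/lt0r_neq0/denR_gt0.
Qed.

Lemma revS : rev S = map (erot p q) S.
Proof.
apply: (@sorted_eq_in _ (fun e f => key f <= key e)).
- by move=> y x z _ _ _ h1 h2; exact: le_trans h2 h1.
- move=> e f; rewrite !mem_rev => he hf /andP [h1 h2].
  rewrite memS in he; rewrite memS in hf.
  rewrite key_le_int in h1; rewrite key_le_int in h2.
  apply: (key0_inj _ _ p0 q0 cop e f he hf); lia.
- by rewrite rev_sorted; exact: sortedS_L.
- rewrite sorted_map; apply: sub_sorted sortedS_L => e f.
  by rewrite /relpre /leL /= !key_rot lerD2l lerN2.
- apply: uniq_perm.
  + by rewrite rev_uniq uniqS.
  + by rewrite (map_inj_uniq (can_inj (erotK p q))) uniqS.
  + move=> e; rewrite mem_rev memS.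
    have -> : (e \in map (erot p q) S) = (erot p q e \in S).
      by rewrite -{1}[e](erotK p q) (mem_map (can_inj (erotK p q))).
    by rewrite memS mL_rot.
Qed.

Lemma letter0 e : edge_letter R (P0 R 0) d e = (edge_gen e, 0 <= Cof p q e).
Proof.
by rewrite /edge_letter cross_mid_eq mul0r subr0 pmulr_lge0 ?invr_gt0 ?ltr0n // ler0z.
Qed.

Lemma letterE e : edge_letter R (P0 R eps) d e = (edge_gen e, 0 < Cof p q e).
Proof.
rewrite /edge_letter cross_mid_eq; congr (_, _).
have h2 := eps2p; have hp := mulr_gt0 e0 hpR.
case: (ltrP 0 (Cof p q e)) => h.
  have : 1 <= (Cof p q e)%:~R :> R by rewrite ler1z.
  move=> h'; apply/idP; lra.
have : (Cof p q e)%:~R <= 0 :> R by rewrite lerz0.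
move=> h'; apply/negbTE; rewrite -ltNge; lra.
Qed.

Lemma main_eq : omega_bar R p q eps = gx :: gy :: gz :: winv (omega R p q).
Proof.
have -> : omega_bar R p q eps = map (edge_letter R (P0 R eps) d) T by [].
have -> : omega R p q = map (edge_letter R (P0 R 0) d) S.
  by rewrite /omega /crossing_word /S /leL /key /P0 oppr0.
have hP := P_gt0 _ q p0 q0 cop; have hQ := Q_gt0 p _ p0 q0 cop.
rewrite T_eq map_cat /= !letterE.
rewrite /Cof /edge_gen /=.
congr (_ :: _ :: _ :: _).
- by rewrite /gx; congr (_, _); apply/idP; lia.
- by rewrite /gy; congr (_, _); apply/idP; lia.
- by rewrite /gz; congr (_, _); apply/idP; lia.
rewrite /winv -map_rev -map_rev revS -!map_comp; apply: eq_map => e /=.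
rewrite letter0 letterE /linv /= Cof_rot /edge_gen rot_kind; congr (_, _).
by rewrite oppr_ge0 -ltNge.
Qed.
End Main.


Theorem lemma5p4 (R : realFieldType) (p q : nat) :
  (0 < p)%N -> (0 < q)%N -> coprime p q ->
  exists eps0 : R, 0 < eps0 /\
    forall eps : R, 0 < eps -> eps < eps0 ->
      fg_eq (omega_bar R p q eps) (gx :: gy :: gz :: winv (omega R p q)).
Proof.
move=> p0 q0 cop.
have hpq : (0 : R) < 2 * (p%:R + q%:R) by rewrite mulr_gt0 // addr_gt0 // ltr0n.
exists (1 / (2 * (p%:R + q%:R))); split; first by rewrite divr_gt0.
move=> eps e0 he; rewrite /fg_eq (main_eq _ _ _ p0 q0 cop _ e0) //.
move: he; rewrite ltr_pdivlMr // mul1r => he.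
rewrite -div1r ltr_pdivlMr ?ltr0n //; move: he; by rewrite [2 * _]mulrC mulrA.
Qed.
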